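(* Let $\mathbb{S}\in\mathbb{Z}^{N_X\times N_e}$, $\mathcal{X}=\mathbb{R}^{N_X}_{>0}$, let $\Phi$ be a primal thermodynamic function on $\mathcal{X}$, $\tilde{x}\in\mathcal{X}$, $f_{NE}\in\mathbb{R}^{N_e}$ a constant vector, and $\{\Psi^*_x\}_{x\in\mathcal{X}}$ a family of dissipation functions on $\mathbb{R}^{N_e}$. Consider the flow $$\dot{x}=-\mathbb{S}\,\nabla\Psi^*_x\big(f(x)\big),\qquad f(x):=\mathbb{S}^T\nabla_x\mathcal{D}_\Phi[x\|\tilde{x}]+f_{NE}=\mathbb{S}^T\big(\nabla\Phi(x)-\nabla\Phi(\tilde{x})\big)+f_{NE},$$ with flux $j(x):=\nabla\Psi^*_x(f(x))$, and let $\mathcal{M}^{\mathrm{DB}}:=\{x\in\mathcal{X}: j(x)=0\}$. If $\mathcal{M}^{\mathrm{DB}}\neq\emptyset$, then $f_{NE}\in\mathrm{Im}\,\mathbb{S}^T$ (i.e. the flow is an equilibrium flow).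
   Context: A primal thermodynamic function is a strictly convex differentiable $\Phi:\mathcal{X}\to\mathbb{R}$ such that $\{\nabla\Phi(x):x\in\mathcal{X}\}=\mathbb{R}^{N_X}$ and, for every $x_{in}\in\mathcal{X}$ and $x_{bd}\in\mathbb{R}^{N_X}_{\ge0}\setminus\mathcal{X}$, $\lim_{\lambda\to0^+}\frac{d}{d\lambda}\Phi(\lambda x_{in}+(1-\lambda)x_{bd})=-\infty$. Its Bregman divergence is $\mathcal{D}_\Phi[x\|x']=\Phi(x)-\Phi(x')-\langle x-x',\nabla\Phi(x')\rangle$. A dissipation function on $\mathbb{R}^{N_e}$ is a strictly convex, continuously differentiable, $1$-coercive, even function $\psi$ with $\psi(0)=0$; for such a function $\nabla\psi$ is a bijection of $\mathbb{R}^{N_e}$ with $\nabla\psi(f)=0$ iff $f=0$. *)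

(* Defs.v *)
From HB Require Import structures.
From mathcomp Require Import all_boot all_order all_algebra.
From mathcomp Require Import all_classical all_reals all_analysis.
Set Implicit Arguments. Unset Strict Implicit. Unset Printing Implicit Defensive.
Import Order.TTheory GRing.Theory Num.Theory.
Import numFieldNormedType.Exports.
Local Open Scope classical_set_scope.
Local Open Scope ring_scope.

Section Defs.
Variable R : realType.

Definition posvec (n : nat) (x : 'cV[R]_n) : Prop := forall i, 0 < x i 0.
Definition nnegvec (n : nat) (x : 'cV[R]_n) : Prop := forall i, 0 <= x i 0.

Definition grad (n : nat) (F : 'cV[R]_n -> R) (x : 'cV[R]_n) : 'cV[R]_n :=
  \col_i ('d F x (delta_mx i 0)).

Definition strictly_convex_on (n : nat) (D : set 'cV[R]_n) (F : 'cV[R]_n -> R) :=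
  forall x y (t : R), D x -> D y -> x != y -> 0 < t < 1 ->
    F (t *: x + (1 - t) *: y) < t * F x + (1 - t) * F y.

Definition primal_thermo (n : nat) (Phi : 'cV[R]_n -> R) : Prop :=
  [/\ strictly_convex_on (@posvec n) Phi,
      (forall x, posvec x -> differentiable Phi x),
      (forall y : 'cV[R]_n, exists x, posvec x /\ grad Phi x = y) &
      (forall xin xbd, posvec xin -> nnegvec xbd -> ~ posvec xbd ->
         (derive1 (fun l : R => Phi (l *: xin + (1 - l) *: xbd))) l
           @[l --> 0^'+] --> -oo)].

Definition bregman (n : nat) (Phi : 'cV[R]_n -> R) (x x' : 'cV[R]_n) : R :=
  Phi x - Phi x' - (\sum_i (x - x') i 0 * grad Phi x' i 0).

Definition dissipation (n : nat) (psi : 'cV[R]_n -> R) : Prop :=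
  [/\ strictly_convex_on setT psi,
      (forall f, differentiable psi f) /\ continuous (grad psi),
      (forall M : R, exists r : R, forall f, r < `|f| -> M < psi f / `|f|),
      (forall f, psi (- f) = psi f) &
      psi 0 = 0].

Definition Sr (NX Ne : nat) (S : 'M[int]_(NX, Ne)) : 'M[R]_(NX, Ne) :=
  map_mx (fun z : int => z%:~R) S.

Definition force (NX Ne : nat) (S : 'M[int]_(NX, Ne)) (Phi : 'cV[R]_NX -> R)
  (xt : 'cV[R]_NX) (fNE : 'cV[R]_Ne) (x : 'cV[R]_NX) : 'cV[R]_Ne :=
  (Sr S)^T *m (grad Phi x - grad Phi xt) + fNE.

Definition flux (NX Ne : nat) (S : 'M[int]_(NX, Ne)) (Phi : 'cV[R]_NX -> R)
  (xt : 'cV[R]_NX) (fNE : 'cV[R]_Ne) (Psi : 'cV[R]_NX -> 'cV[R]_Ne -> R)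
  (x : 'cV[R]_NX) : 'cV[R]_Ne :=
  grad (Psi x) (force S Phi xt fNE x).

End Defs.

(* Main.v *)
Require Import Defs.
From HB Require Import structures.
From mathcomp Require Import all_boot all_order all_algebra.
From mathcomp Require Import all_classical all_reals all_analysis.
From mathcomp Require Import ring lra.
Import Order.TTheory GRing.Theory Num.Theory.
Import numFieldNormedType.Exports.
Local Open Scope classical_set_scope.
Local Open Scope ring_scope.

Lemma diff_zero_all (R : realType) n (psi : 'cV[R]_n -> R) f :
  grad psi f = 0 -> forall v, 'd psi f v = 0.
Proof.
move=> g v; rewrite [v]matrix_sum_delta linear_sum big1 // => i _.
rewrite big_ord1 linearZ /=.
have := congr1 (fun M : 'cV[R]_n => M i 0) g; rewrite /grad mxE !mxE => ->.
by rewrite scaler0.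
Qed.

Lemma dissip_grad0 (R : realType) n (psi : 'cV[R]_n -> R) f :
  dissipation psi -> grad psi f = 0 -> f = 0.
Proof.
case=> sc [dif _] _ ev p0 g.
apply/eqP; apply/negPn/negP => fn0.
have fnf : f != - f.
  apply/negP => /eqP ef; move/eqP: fn0; apply.
  have : f + f = 0 by rewrite {2}ef subrr.
  by rewrite -mulr2n -scaler_nat => /eqP; rewrite scaler_eq0 pnatr_eq0 /= => /eqP.
have cpos : 0 < psi f.
  have := sc f (- f) (2^-1) I I fnf.
  rewrite invr_gt0 ltr0n invf_lt1 ?ltr0n // ltr1n /= => /(_ isT).
  have -> : 1 - 2^-1 = 2^-1 :> R by field.
  rewrite -scalerDr subrr scaler0 p0 ev; lra.
have D : derivable psi f (- f) by apply: diff_derivable.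
have D0 : 'D_(- f) psi f = 0 by rewrite deriveE // diff_zero_all.
have cv : (fun h : R => h^-1 *: ((psi \o shift f) (h *: - f) - psi f)) @ 0^' --> 0.
  have cv' : (fun h : R => h^-1 *: ((psi \o shift f) (h *: - f) - psi f)) @ 0^' --> 'D_(- f) psi f by exact: D.
  by rewrite D0 in cv'.
have Hn : \forall h \near 0^', - psi f <= h^-1 *: ((psi \o shift f) (h *: - f) - psi f).
  by apply: (cvgr_ge 0 cv); rewrite oppr_lt0.
have Hr : \forall h \near 0^'+, - psi f <= h^-1 *: ((psi \o shift f) (h *: - f) - psi f).
  move: Hn; rewrite !near_withinE; apply: filterS => h H hp; apply: H.
  by rewrite gt_eqF.
have H1 : \forall h \near (0:R)^'+, h < 1.
  exact: nbhs_right_lt ltr01.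
have HH : \forall h \near (0:R)^'+, ((- psi f <= h^-1 *: ((psi \o shift f) (h *: - f) - psi f)) /\ 0 < h) /\ h < 1.
  apply: filterI; last exact: H1.
  apply: filterI; first exact: Hr.
  exact: nbhs_right_gt.
have [h [[Hh hp] h1]] := filter_ex HH.
have : psi (h *: 0 + (1 - h) *: f) < h * psi 0 + (1 - h) * psi f.
  apply: sc => //; first by rewrite eq_sym.
  by rewrite hp h1.
have -> : h *: 0 + (1 - h) *: f = h *: - f + f.
  by rewrite scaler0 add0r scalerBl scale1r scalerN addrC.
rewrite p0 mulr0 add0r => Hc.
move: Hh; rewrite /= -[_ *: _]/(h^-1 * _) ler_pdivlMl // => Hh.
nra.
Qed.

Theorem mainTheorem3 (R : realType) (NX Ne : nat) (S : 'M[int]_(NX, Ne))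
  (Phi : 'cV[R]_NX -> R) (xt : 'cV[R]_NX) (fNE : 'cV[R]_Ne)
  (Psi : 'cV[R]_NX -> 'cV[R]_Ne -> R) :
  primal_thermo Phi ->
  posvec xt ->
  (forall x, posvec x -> dissipation (Psi x)) ->
  (exists x, posvec x /\ flux S Phi xt fNE Psi x = 0) ->
  exists y : 'cV[R]_NX, fNE = (Sr R S)^T *m y.
Proof.
move=> _ _ Hd [x [px Hx]].
have F0 := @dissip_grad0 R _ _ _ (Hd x px) Hx.
rewrite /flux in Hx. move: F0; rewrite /force => F0.
exists (- (grad Phi x - grad Phi xt)).
by rewrite mulmxN; apply/eqP; rewrite -addr_eq0 addrC F0.
Qed.
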